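(* In any weighted graph on $n$ vertices with $\mathsf{OPT}^{\mathsf{IR}}<\mathsf{OPT}^{\mathsf{stable}}$, there exists a persuasive signaling scheme with at most $n+1$ signals (i.e., $|\Sigma|\le n+1$) whose cost is strictly lower than $\mathsf{OPT}^{\mathsf{stable}}$.
   Context: Setting. $V$ is a finite set of $n$ task types and $W=(W_{u,v})_{u,v\in V}$ is a symmetric matrix with entries in $[0,1]$ and $W_{v,v}=1$ for all $v$ (the weighted graph has edges $\{u,v\}$, $u\ne v$, with $W_{u,v}>0$ and weight $W_{u,v}$). A vector $\theta\in\mathbb{R}_{\ge0}^V$ is feasible if $W\theta\ge\mathbf 1$ coordinatewise, and stable if it is feasible and for every $v$, $\theta_v=\min\{x\ge0: x+\sum_{v'\neq v}W_{v,v'}\theta_{v'}\ge1\}$. $\mathsf{OPT}^{\mathsf{IR}}=\min\{\|\theta\|_1:\theta\in[0,1]^V\text{ feasible}\}$ and $\mathsf{OPT}^{\mathsf{stable}}=\min\{\|\theta\|_1:\theta\text{ stable}\}$. Signaling. There are $n$ agents; the type profile $t=(t_1,\dots,t_n)$ is a uniformly random bijection $[n]\to V$. A signaling scheme with finite signal space $\Sigma\subset[0,1]$ is a map $\varphi$ assigning to each bijection $t$ a distribution $\varphi(t)$ on $\Sigma^V$; given $t$, $s\sim\varphi(t)$ is drawn and agent $i$ privately receives $s_{t_i}$. For agent $i$, a signal $\theta\in\Sigma$ with $\Pr[s_{t_i}=\theta]>0$ and $x\ge0$, let $Q_i(x\mid\theta)=\mathbb{E}\big[x+\sum_{v'\neq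 t_i}W_{t_i,v'}s_{v'}\,\big|\,s_{t_i}=\theta\big]$. The scheme is persuasive if for every agent $i$ and every such $\theta$: $Q_i(\theta\mid\theta)\ge1$ and $\theta=\min\{x\ge0:Q_i(x\mid\theta)\ge1\}$. Its cost is $\mathbb{E}[\|s\|_1]$. *)

(* Defs.v *)
From HB Require Import structures.
From mathcomp Require Import all_boot all_order all_algebra.
From mathcomp Require Export reals.
Set Implicit Arguments. Unset Strict Implicit. Unset Printing Implicit Defensive.
Import Order.TTheory GRing.Theory Num.Theory.
Local Open Scope ring_scope.

Section Defs.
Variables (R : realType) (V : finType).

Definition weight_matrix (W : V -> V -> R) : Prop :=
  (forall u v, W u v = W v u) /\ (forall u v, 0 <= W u v <= 1) /\
  (forall v, W v v = 1).

Definition least (P : R -> Prop) (x : R) : Prop :=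
  P x /\ forall y, P y -> x <= y.

Definition feasible (W : V -> V -> R) (th : V -> R) : Prop :=
  (forall v, 0 <= th v) /\ (forall v, 1 <= \sum_u W v u * th u).

Definition IR_feasible (W : V -> V -> R) (th : V -> R) : Prop :=
  feasible W th /\ (forall v, th v <= 1).

Definition stable (W : V -> V -> R) (th : V -> R) : Prop :=
  feasible W th /\
  forall v, least (fun x => 0 <= x /\ 1 <= x + \sum_(u | u != v) W v u * th u)
                  (th v).

Definition l1norm (th : V -> R) : R := \sum_v `|th v|.

Definition is_OPT_IR (W : V -> V -> R) (o : R) : Prop :=
  (exists th, IR_feasible W th /\ l1norm th = o) /\
  (forall th, IR_feasible W th -> o <= l1norm th).

Definition is_OPT_stable (W : V -> V -> R) (o : R) : Prop :=
  (exists th, stable W th /\ l1norm th = o) /\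
  (forall th, stable W th -> o <= l1norm th).

(* Agents are 'I_n with n = #|V|; a type profile is a bijection
   t : 'I_n -> V, i.e. an injective finite function.  The signal space is
   Sigma = {sig j | j < k} with sig injective (so |Sigma| = k), values in [0,1].
   A signal vector s in Sigma^V is encoded by its index vector {ffun V -> 'I_k}.
   phi t is a probability distribution on signal vectors for each bijection t. *)
Definition profile := {ffun 'I_#|V| -> V}.
Definition bijections : {set profile} := [set t : profile | injectiveb t].

Definition is_scheme (k : nat) (sig : 'I_k -> R)
    (phi : profile -> {ffun V -> 'I_k} -> R) : Prop :=
  injective sig /\ (forall j, 0 <= sig j <= 1) /\
  forall t, t \in bijections ->
    (forall s, 0 <= phi t s) /\ \sum_s phi t s = 1.

Definition jointP (k : nat) (phi : profile -> {ffun V -> 'I_k} -> R)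
    (t : profile) (s : {ffun V -> 'I_k}) : R :=
  if t \in bijections then phi t s / #|bijections|%:R else 0.

Definition PrSig (k : nat) (sig : 'I_k -> R)
    (phi : profile -> {ffun V -> 'I_k} -> R) (i : 'I_#|V|) (theta : R) : R :=
  \sum_(t : profile) \sum_(s : {ffun V -> 'I_k}) (sig (s (t i)) == theta)%:R * jointP phi t s.

Definition Qi (W : V -> V -> R) (k : nat) (sig : 'I_k -> R)
    (phi : profile -> {ffun V -> 'I_k} -> R) (i : 'I_#|V|) (x theta : R) : R :=
  (\sum_(t : profile) \sum_(s : {ffun V -> 'I_k}) (sig (s (t i)) == theta)%:R * jointP phi t s *
      (x + \sum_(v | v != t i) W (t i) v * sig (s v)))
  / PrSig sig phi i theta.

Definition persuasive (W : V -> V -> R) (k : nat) (sig : 'I_k -> R)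
    (phi : profile -> {ffun V -> 'I_k} -> R) : Prop :=
  forall (i : 'I_#|V|) (j : 'I_k), 0 < PrSig sig phi i (sig j) ->
    1 <= Qi W sig phi i (sig j) (sig j) /\
    least (fun x => 0 <= x /\ 1 <= Qi W sig phi i x (sig j)) (sig j).

Definition cost (k : nat) (sig : 'I_k -> R)
    (phi : profile -> {ffun V -> 'I_k} -> R) : R :=
  \sum_(t : profile) \sum_(s : {ffun V -> 'I_k}) jointP phi t s * l1norm (fun v => sig (s v)).

End Defs.

(* Main.v *)
Require Import Defs.
From HB Require Import structures.
From mathcomp Require Import all_boot all_order all_algebra.
From mathcomp Require Import reals.
From mathcomp Require Import fingroup perm.
From mathcomp Require Import ring lra.
Import Order.TTheory GRing.Theory Num.Theory.
Local Open Scope ring_scope.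

Section Aux.
Variables (R : realType) (V : finType).

Lemma exists_bij (i : 'I_#|V|) (v : V) :
  exists t : profile V, t \in bijections V /\ t i = v.
Proof.
exists [ffun j => tperm (enum_val i) v (enum_val j)]; split.
  rewrite inE; apply/injectiveP => j1 j2; rewrite !ffunE.
  by move/perm_inj/enum_val_inj.
by rewrite ffunE tpermL.
Qed.

Lemma sum_ind (T : finType) (a : T) (g : T -> R) :
  \sum_s (s == a)%:R * g s = g a.
Proof.
rewrite (bigD1 a) //= eqxx mul1r big1 ?addr0 // => s /negbTE ->.
by rewrite mul0r.
Qed.

End Aux.

Section Sig.
Variables (R : realType) (V : finType) (y : V -> R).

Definition Ls : seq R := undup (0 :: [seq y v | v <- enum V]).
Definition kk := size Ls.
Definition sg (j : 'I_kk) : R := nth 0 Ls j.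

Lemma yL v : y v \in Ls.
Proof. by rewrite mem_undup in_cons map_f ?mem_enum ?orbT. Qed.
Lemma zL : 0 \in Ls.
Proof. by rewrite mem_undup mem_head. Qed.
Lemma idx_lt {x} : x \in Ls -> (index x Ls < kk)%N.
Proof. by rewrite index_mem. Qed.

Definition sy : {ffun V -> 'I_kk} := [ffun v => Ordinal (idx_lt (yL v))].
Definition s0 : {ffun V -> 'I_kk} := [ffun v => Ordinal (idx_lt zL)].

Lemma sg_sy v : sg (sy v) = y v.
Proof. by rewrite /sg ffunE /= nth_index ?yL. Qed.
Lemma sg_s0 v : sg (s0 v) = 0.
Proof. by rewrite /sg ffunE /= nth_index ?zL. Qed.

Lemma sg_inj : injective sg.
Proof.
move=> i j; rewrite /sg => /eqP; rewrite nth_uniq ?undup_uniq //.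
by move/eqP/val_inj.
Qed.

Lemma kk_le : (kk <= #|V|.+1)%N.
Proof.
rewrite /kk /Ls; apply: (leq_trans (size_undup _)).
by rewrite /= size_map -cardE.
Qed.

Lemma sg_in (x : R) : x \in Ls -> x = 0 \/ exists v, x = y v.
Proof.
rewrite mem_undup in_cons => /orP [/eqP ->|/mapP [v _ ->]]; first by left.
by right; exists v.
Qed.

End Sig.
Arguments Ls {R V} y.
Arguments kk {R V} y.
Arguments sg {R V} y j.
Arguments sy {R V} y.
Arguments s0 {R V} y.

Lemma Qi_eq (R : realType) (V : finType) (W : V -> V -> R) (k : nat)
  (sig : 'I_k -> R) (phi : profile V -> {ffun V -> 'I_k} -> R) i x th :
  PrSig sig phi i th != 0 ->
  Qi W sig phi i x th = x + (\sum_(t : profile V) \sum_(s : {ffun V -> 'I_k})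
     (sig (s (t i)) == th)%:R * jointP phi t s *
     (\sum_(v | v != t i) W (t i) v * sig (s v))) / PrSig sig phi i th.
Proof.
move=> hP; rewrite /Qi.
under eq_bigr do under eq_bigr do rewrite mulrDr.
under eq_bigr do rewrite big_split /=.
rewrite big_split /= mulrDl; congr (_ + _).
rewrite /PrSig; under eq_bigr do rewrite -mulr_suml.
rewrite -mulr_suml mulrC mulKf //.
Qed.

Section Main.
Variables (R : realType) (V : finType) (y : V -> R) (p : R).

Definition NB : R := #|bijections V|%:R.
Definition phi0 : profile V -> {ffun V -> 'I_(kk y)} -> R :=
  fun _ s => (1 - p) * (s == sy y)%:R + p * (s == s0 y)%:R.
Definition aw (t : profile V) : R := if t \in bijections V then NB^-1 else 0.

Lemma struct (G : {ffun V -> 'I_(kk y)} -> R) t :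
  \sum_s G s * jointP phi0 t s = aw t * ((1 - p) * G (sy y) + p * G (s0 y)).
Proof.
rewrite /jointP /aw; case: ifP => _; last first.
  by rewrite mul0r big1 // => s _; rewrite mulr0.
transitivity (\sum_s (NB^-1 * (1 - p) * ((s == sy y)%:R * G s) +
                      NB^-1 * p * ((s == s0 y)%:R * G s))).
  by apply: eq_bigr => s _; rewrite /phi0; ring.
by rewrite big_split /= -!mulr_sumr !sum_ind; ring.
Qed.

Lemma sum_aw : (0 < #|bijections V|)%N -> \sum_t aw t = 1.
Proof.
move=> h; rewrite /aw -big_mkcond /= sumr_const /NB.
by rewrite -[_ *+ _]mulr_natr mulVf // pnatr_eq0 -lt0n.
Qed.

End Main.

Section Stab.
Variables (R : realType) (V : finType) (W : V -> V -> R) (y : V -> R).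
Hypothesis hW : weight_matrix W.
Hypothesis hy : stable W y.

Definition oy v := \sum_(u | u != v) W v u * y u.

Lemma y_ge0 v : 0 <= y v.
Proof. by case: hy => [[h _] _]. Qed.

Lemma oy_ge0 v : 0 <= oy v.
Proof.
apply: sumr_ge0 => u _; apply: mulr_ge0; last exact: y_ge0.
by case: hW => _ [h _]; case/andP: (h v u).
Qed.

Lemma row_eq v : \sum_u W v u * y u = y v + oy v.
Proof. by rewrite (bigD1 v) //=; case: hW => _ [_ ->]; rewrite mul1r. Qed.

Lemma row_ge1 v : 1 <= y v + oy v.
Proof. by rewrite -row_eq; case: hy => [[_ h] _]. Qed.

Lemma y_le1 v : y v <= 1.
Proof.
case: hy => _ /(_ v) [_ h]; apply: h; split => //.
by rewrite lerDl; apply: oy_ge0.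
Qed.

Lemma tight v : y v != 0 -> y v + oy v = 1.
Proof.
move=> hv; have hy0 := y_ge0 v; have hr := row_ge1 v.
case: hy => _ /(_ v) [_ h].
have [ho|ho] := lerP 1 (oy v).
  have : y v <= 0 by apply: h; split => //; rewrite add0r.
  by move: hv; rewrite /oy => hv hle; exfalso; move: hv; rewrite eq_le hle hy0.
move: hr ho; rewrite /oy => hr ho.
have : y v <= 1 - \sum_(u | u != v) W v u * y u by apply: h; split; lra.
move=> hle; lra.
Qed.


Lemma gap (th : V -> R) : IR_feasible W th -> l1norm th < l1norm y ->
  exists v0, y v0 = 0 /\ 1 < oy v0.
Proof.
move=> [[th0 thf] _] hlt.
have [/existsP [v /andP [/eqP h1 h2]]|hn] :=
  boolP [exists v, (y v == 0) && (1 < oy v)]; first by exists v.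
exfalso; move: hn; rewrite negb_exists => /forallP hn.
have hrow : forall v, \sum_u W v u * y u = 1.
  move=> v; rewrite row_eq; have [h0|h0] := eqVneq (y v) 0; last exact: tight.
  have := hn v; rewrite h0 eqxx /= -leNgt => h; have := row_ge1 v.
  rewrite h0 !add0r => h'; apply/eqP; rewrite eq_le h h' //.
have : l1norm y <= l1norm th; last by rewrite leNgt hlt.
rewrite /l1norm.
have -> : \sum_v `|th v| = \sum_v (\sum_u W v u * y u) * th v.
  by apply: eq_bigr => v _; rewrite hrow mul1r ger0_norm.
have -> : \sum_v (\sum_u W v u * y u) * th v =
          \sum_v \sum_u W v u * y u * th v.
  by apply: eq_bigr => v _; rewrite mulr_suml.
rewrite exchange_big /=; apply: ler_sum => u _.
rewrite ger0_norm ?y_ge0 //.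
rewrite (eq_bigr (fun v => y u * (W u v * th v))); last first.
  by move=> v _; case: hW => hs _; rewrite (hs v u); ring.
rewrite -mulr_sumr -{1}[y u]mulr1; apply: ler_wpM2l; first exact: y_ge0.
exact: thf.
Qed.

End Stab.

Lemma sum_ind1 (R : realType) (T : finType) (a : T) :
  \sum_(s : T) (s == a)%:R = 1 :> R.
Proof.
have h : forall s : T, (s == a)%:R = (s == a)%:R * (1:R).
  by move=> s; rewrite mulr1.
rewrite (eq_bigr _ (fun s _ => h s)).
exact: (sum_ind R T a (fun _ => 1)).
Qed.

Theorem theorem1p4 (R : realType) (V : finType) (W : V -> V -> R)
    (optIR optST : R) :
  weight_matrix W ->
  is_OPT_IR W optIR -> is_OPT_stable W optST ->
  optIR < optST ->
  exists (k : nat) (sig : 'I_k -> R) (phi : profile V -> {ffun V -> 'I_k} -> R),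
    (k <= #|V|.+1)%N /\ is_scheme sig phi /\ persuasive W sig phi /\
    cost sig phi < optST.
Proof.
move=> hW [[thI [hIRf hIRl]] _] [[y [hys hyl]] _] hlt.
have optIR_ge0 : 0 <= optIR.
  by rewrite -hIRl; apply: sumr_ge0 => v _; exact: normr_ge0.
have hlt' : l1norm thI < l1norm y by rewrite hIRl hyl.
have [v0 [hy0 ho0]] := gap _ _ W y hW hys thI hIRf hlt'.
have [t1 [ht1B _]] := exists_bij V (enum_rank v0) v0.
have hB : (0 < #|bijections V|)%N by apply/card_gt0P; exists t1.
have hN : 0 < NB R V by rewrite /NB ltr0n.
set d := oy _ _ W y v0 - 1.
have hd : 0 < d by rewrite /d subr_gt0.
set p := d / (NB R V + d).
have hp0 : 0 < p by rewrite /p divr_gt0 // addr_gt0.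
have hp1 : p < 1.
  rewrite /p ltr_pdivrMr; last exact: addr_gt0.
  rewrite mul1r; lra.
have hkey : (NB R V)^-1 * (1 - p) * d = p.
  rewrite /p; field; apply/andP; split; rewrite gt_eqF //; exact: addr_gt0.
have sg01 : forall j, 0 <= sg y j <= 1.
  move=> j; have := sg_in _ _ y (nth 0 (Ls y) j) (mem_nth 0 (ltn_ord j)).
  rewrite /sg; case=> [->|[v ->]]; first by rewrite lexx ler01.
  by rewrite (y_ge0 _ _ W y hys) (y_le1 _ _ W y hW hys).
exists (kk y), (sg y), (phi0 _ _ y p).
split; first exact: kk_le.
split.
  split; first exact: sg_inj.
  split; first exact: sg01.
  move=> t _; split.
    move=> s; rewrite /phi0; apply: addr_ge0; apply: mulr_ge0 => //;
      rewrite ?ler0n ?subr_ge0 ?ltW //.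
  rewrite /phi0 big_split /= -!mulr_sumr !sum_ind1; ring.
split; last first.
  rewrite /cost.
  under eq_bigr => t _ do under eq_bigr => s _ do rewrite mulrC.
  under eq_bigr => t _ do rewrite (struct _ _ y p (fun s => l1norm (fun v => sg y (s v)))).
  have -> : l1norm (fun v => sg y (sy y v)) = optST.
    by rewrite -hyl /l1norm; apply: eq_bigr => v _; rewrite sg_sy.
  have -> : l1norm (fun v => sg y (s0 y v)) = 0 :> R.
    by rewrite /l1norm big1 // => v _; rewrite sg_s0 normr0.
  rewrite -mulr_suml sum_aw // mul1r mulr0 addr0.
  by rewrite -[X in _ < X]mul1r ltr_pM2r ?ltrBlDr ?ltrDl //; lra.
move=> i j hPr.
set th := sg y j.
have hPr0 : PrSig (sg y) (phi0 _ _ y p) i th != 0 by rewrite gt_eqF.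
have ePr : PrSig (sg y) (phi0 _ _ y p) i th = \sum_t aw R V t *
    ((1 - p) * (y (t i) == th)%:R + p * (0 == th)%:R).
  rewrite /PrSig; apply: eq_bigr => t _.
  by rewrite (struct _ _ y p (fun s => (sg y (s (t i)) == th)%:R)) sg_sy sg_s0.
pose S := \sum_(t : profile V) \sum_(s : {ffun V -> 'I_(kk y)})
  (sg y (s (t i)) == th)%:R * jointP (phi0 _ _ y p) t s *
  (\sum_(v | v != t i) W (t i) v * sg y (s v)).
have eQ : forall x, Qi W (sg y) (phi0 _ _ y p) i x th =
    x + S / PrSig (sg y) (phi0 _ _ y p) i th.
  by move=> x; rewrite (Qi_eq _ _ W _ (sg y) (phi0 _ _ y p) i x th hPr0).
have eS : S = \sum_t aw R V t *
    ((1 - p) * ((y (t i) == th)%:R * oy _ _ W y (t i))).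
  rewrite /S; apply: eq_bigr => t _.
  rewrite (eq_bigr (fun s : {ffun V -> 'I_(kk y)} => ((sg y (s (t i)) == th)%:R *
      \sum_(v | v != t i) W (t i) v * sg y (s v)) * jointP (phi0 _ _ y p) t s));
    last by move=> s _; rewrite mulrAC.
  rewrite (struct _ _ y p (fun s : {ffun V -> 'I_(kk y)} => (sg y (s (t i)) == th)%:R *
      \sum_(v | v != t i) W (t i) v * sg y (s v))) /= sg_sy sg_s0.
  rewrite [X in p * (_ * X)]big1; last by move=> v _; rewrite sg_s0 mulr0.
  rewrite mulr0 mulr0 addr0 /oy; congr (_ * (_ * (_ * _))).
  by apply: eq_bigr => v _; rewrite sg_sy.
have hPrp : 0 < PrSig (sg y) (phi0 _ _ y p) i th := hPr.
have th_ge0 : 0 <= th by case/andP: (sg01 j).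
have [th0|thn0] := eqVneq th 0.
  have hSP : PrSig (sg y) (phi0 _ _ y p) i th <= S.
    pose h t := aw R V t * ((1 - p) * ((y (t i) == 0)%:R * (oy _ _ W y (t i) - 1))).
    have e1 : S = \sum_t aw R V t * ((1 - p) * (y (t i) == 0)%:R) + \sum_t h t.
      rewrite eS th0 -big_split /=; apply: eq_bigr => t _; rewrite /h /=; ring.
    have e2 : PrSig (sg y) (phi0 _ _ y p) i th =
        \sum_t aw R V t * ((1 - p) * (y (t i) == 0)%:R) + p.
      rewrite ePr th0 eqxx.
      rewrite [RHS](_ : _ = \sum_t aw R V t * ((1 - p) * (y (t i) == 0)%:R) +
                        p * \sum_t aw R V t); last by rewrite sum_aw // mulr1.
      rewrite mulr_sumr -big_split /=.
      by apply: eq_bigr => t _; ring.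
    have hge : forall t, 0 <= h t.
      move=> t; rewrite /h; apply: mulr_ge0.
        by rewrite /aw; case: ifP => _ //; rewrite invr_ge0 ltW.
      apply: mulr_ge0; first by rewrite subr_ge0 ltW.
      have [hy'|hy'] := eqVneq (y (t i)) 0; last by rewrite mul0r.
      rewrite mul1r subr_ge0; have := row_ge1 _ _ W y hW hys (t i).
      by rewrite hy' add0r.
    have [t2 [ht2B ht2i]] := exists_bij V i v0.
    have hh : p <= \sum_t h t.
      rewrite (bigD1 t2) //=; apply: ler_wpDr; first exact: sumr_ge0.
      rewrite /h ht2i hy0 eqxx mul1r /aw ht2B mulrA -/d hkey.
      exact: lexx.
    by rewrite e1 e2 lerD2l.
  have hq : forall x, x + 1 <= Qi W (sg y) (phi0 _ _ y p) i x th.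
    move=> x; rewrite eQ lerD2l ler_pdivlMr // mul1r //.
  split; first by have := hq th; rewrite th0 add0r.
  split; first by split=> //; have := hq th; rewrite th0 add0r.
  by move=> z [hz _]; rewrite th0.
have eS2 : S = (1 - th) * PrSig (sg y) (phi0 _ _ y p) i th.
  rewrite eS ePr mulr_sumr; apply: eq_bigr => t _.
  have -> : (0 == th) = false by rewrite eq_sym (negbTE thn0).
  rewrite mulr0 addr0.
  case: eqP => [hy'|_]; last by rewrite /=; ring.
  have : y (t i) + oy _ _ W y (t i) = 1 by apply: tight => //; rewrite hy'.
  rewrite hy' => ho; have -> : oy _ _ W y (t i) = 1 - th by lra.
  rewrite /=; ring.
have hq : forall x, Qi W (sg y) (phi0 _ _ y p) i x th = x + (1 - th).
  by move=> x; rewrite eQ eS2 mulfK.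
split; first by rewrite hq; lra.
split; first by split=> //; rewrite hq; lra.
by move=> z [hz]; rewrite hq; lra.
Qed.
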